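(* Let $(M,A)$ be a $d$-dimensional BUT-manifold. Then $M$ cannot be covered by $d+1$ closed sets none of which contains a pair $(x,A(x))$ of antipodal points.
   Context: A BUT (Borsuk–Ulam type) manifold is a pair $(M,A)$ where $M$ is a connected compact piecewise-linear $d$-dimensional manifold without boundary and $A:M\to M$ is a free simplicial involution ($A(A(x))=x$, $A(x)\neq x$), such that for every continuous $g:M\to\mathbb{R}^d$ there is $x\in M$ with $g(A(x))=g(x)$. *)

(* Defs.v *)
From HB Require Import structures.
From mathcomp Require Import all_boot all_order all_algebra.
From mathcomp Require Import finmap.
From mathcomp Require Import all_classical all_reals all_analysis.
From Stdlib Require Import Relations.
Set Implicit Arguments. Unset Strict Implicit. Unset Printing Implicit Defensive.
Import Order.TTheory GRing.Theory Num.Theory.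
Import numFieldNormedType.Exports.
Local Open Scope fset_scope.

Definition cplx := {fset {fset nat}}.

Definition is_complex (K : cplx) : Prop :=
  fset0 \notin K /\
  (forall s t : {fset nat}, s \in K -> t `<=` s -> t != fset0 -> t \in K).

Definition bd_simplex (W : {fset nat}) : cplx :=
  [fset t in fpowerset W | (t != fset0) && (t != W)].

Definition link (K : cplx) (s : {fset nat}) : cplx :=
  [fset t in K | (fsetI t s == fset0) && (t `|` s \in K)].

(* bistellar (Pachner) move: if lk_K(s) = bd(t) with t not in K,
   replace s * bd(t) by bd(s) * t. *)
Definition bistellar_move (K K' : cplx) : Prop :=
  exists s t : {fset nat},
    [/\ s \in K, t != fset0, t \notin K, fsetI t s == fset0 &
        link K s = bd_simplex t] /\
        K' = [fset r in K | ~~ (s `<=` r)]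
             `|` [fset a `|` t | a in [fset a in fpowerset s | a != s]].

Definition bistellar_equiv : relation cplx :=
  clos_refl_sym_trans cplx bistellar_move.

(* combinatorial (PL) k-sphere: bistellarly equivalent to the boundary of a
   (k+1)-simplex (Pachner's characterization of PL spheres). *)
Definition comb_sphere (k : nat) (K : cplx) : Prop :=
  is_complex K /\
  exists W : {fset nat}, #|` W| = k.+2 /\ bistellar_equiv K (bd_simplex W).

(* combinatorial d-manifold without boundary: links of vertices are
   combinatorial (d-1)-spheres (the empty complex when d = 0). *)
Definition comb_manifold (d : nat) (K : cplx) : Prop :=
  [/\ is_complex K, K != fset0,
      (forall s, s \in K -> #|` s| <= d.+1)%N &
      forall v : nat, [fset v] \in K ->
        if d is d'.+1 then comb_sphere d' (link K [fset v])
        else link K [fset v] = fset0].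

Local Close Scope fset_scope.

Local Open Scope ring_scope.
Local Open Scope classical_set_scope.

Definition verts_below (n : nat) (K : cplx) : Prop :=
  forall s, s \in K -> forall v, v \in s -> (v < n)%N.

(* |K| as a subset of 'rV[R]_n (barycentric coordinates) *)
Definition realization (R : realType) (n : nat) (K : cplx) : set 'rV[R]_n :=
  [set x | (forall i, 0 <= x ord0 i) /\ \sum_(i < n) x ord0 i = 1 /\
           exists s, s \in K /\ forall i : 'I_n, x ord0 i != 0 -> (val i \in s)%fset].

Definition simplicial_involution (K : cplx) (A : nat -> nat) : Prop :=
  (forall s, s \in K -> (A @` s)%fset \in K) /\
  (forall s, s \in K -> forall v, v \in s -> A (A v) = v).

Definition lin_ext (R : realType) (n : nat) (A : nat -> nat) (x : 'rV[R]_n)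
  : 'rV[R]_n :=
  \row_(j < n) \sum_(i < n | A i == j) x ord0 i.

Definition BUT_manifold (R : realType) (d n : nat) (K : cplx) (A : nat -> nat)
  : Prop :=
  let M := @realization R n K in
  let Ah := @lin_ext R n A in
  [/\ comb_manifold d K, verts_below n K, connected M &
      simplicial_involution K A] /\
  (forall x, M x -> Ah x <> x) /\
      forall g : 'rV[R]_n -> 'rV[R]_d, {within M, continuous g} ->
        exists2 x, M x & g (Ah x) = g x.

(* Main.v *)
Require Import Defs.
From HB Require Import structures.
From mathcomp Require Import all_boot all_order all_algebra.
From mathcomp Require Import finmap.
From mathcomp Require Import all_classical all_reals all_analysis.
From mathcomp Require Import lra zify.
Import numFieldNormedType.Exports.
Import Order.TTheory GRing.Theory Num.Theory.
Local Open Scope ring_scope.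
Local Open Scope classical_set_scope.

Section Dst.
Context {R : realType} {V : normedModType R}.

Definition dst (C : set V) (x : V) : R := inf [set `|x - c| | c in C].

Lemma dst_lb (C : set V) (x : V) : has_lbound [set `|x - c| | c in C].
Proof. by exists 0 => _ [c _ <-]. Qed.

Lemma dst_le (C : set V) x c : C c -> dst C x <= `|x - c|.
Proof. by move=> Cc; apply: ge_inf; [exact: dst_lb | exists c]. Qed.

Lemma dst_ge0 (C : set V) (x : V) : 0 <= dst C x.
Proof.
have [->|/set0P[c Cc]] := eqVneq C set0; first by rewrite /dst image_set0 inf0.
apply: lb_le_inf; first by exists `|x - c|, c.
by move=> _ [? _ <-].
Qed.

Lemma dst_in (C : set V) (x : V) : C x -> dst C x = 0.
Proof.
move=> Cx; apply/eqP; rewrite eq_le dst_ge0 andbT.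
by rewrite (le_trans (dst_le C x x Cx)) // subrr normr0.
Qed.

Lemma dst_lip1 (C : set V) (x : V) y : dst C x <= `|x - y| + dst C y.
Proof.
have [->|/set0P[c0 Cc0]] := eqVneq C set0.
  by rewrite /dst !image_set0 inf0 addr0.
rewrite -lerBlDl; apply: lb_le_inf; first by exists `|y - c0|, c0.
move=> _ [c Cc <-]; rewrite lerBlDl.
apply: (le_trans (dst_le C x c Cc)).
have -> : x - c = (x - y) + (y - c) by rewrite addrA subrK.
exact: ler_normD.
Qed.

Lemma dst_lip (C : set V) (x : V) y : `|dst C x - dst C y| <= `|x - y|.
Proof.
have h1 := dst_lip1 C x y; have h2 := dst_lip1 C y x.
rewrite distrC in h2.
rewrite ler_norml; apply/andP; split; lra.
Qed.

Lemma dst0 (C : set V) (x : V) c0 : closed C -> C c0 -> dst C x = 0 -> C x.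
Proof.
move=> cC Cc0 d0.
rewrite (closure_id C).1 //= => B /nbhs_ballP [e /= e0 HB].
have [_ [c Cc <-] Hc] := @inf_adherent R _ e e0 (conj (ex_intro _ _ (ex_intro2 _ _ c0 Cc0 erefl)) (dst_lb C x)).
exists c; split => //; apply: HB; rewrite -ball_normE /=.
by move: Hc; rewrite -/(dst C x) d0 add0r.
Qed.

Lemma lip_cont (W : normedModType R) (f : V -> W) :
  (forall x y, `|f x - f y| <= `|x - y|) -> continuous f.
Proof.
move=> Hf x; apply/cvgrPdist_lt => e e0.
near=> y; apply: le_lt_trans (Hf _ _) _.
near: y; exact: cvgr_dist_lt.
Unshelve. all: by end_near.
Qed.
End Dst.

Lemma lin_ext_real (R : realType) (n : nat) (K : cplx) (A : nat -> nat) x :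
  verts_below n K -> simplicial_involution K A ->
  @realization R n K x -> @realization R n K (@lin_ext R n A x).
Proof.
move=> vb [sA _] [x0 [x1 [s [sK xs]]]].
have As : (A @` s)%fset \in K by exact: sA.
have An i : x ord0 i != 0 -> (A i < n)%N.
  move=> /xs hi; apply: (vb _ As); apply/imfsetP; exists (val i) => //.
split; first by move=> j; rewrite mxE; apply: sumr_ge0 => i _; exact: x0.
split.
  rewrite -{}x1.
  under eq_bigr do rewrite mxE big_mkcond /=.
  rewrite exchange_big /=; apply: eq_bigr => i _.
  have [xi0|xin0] := eqVneq (x ord0 i) 0.
    by rewrite xi0; apply: big1 => j _; case: ifP.
  rewrite -big_mkcond /= (big_pred1 (Ordinal (An i xin0))) // => j.
exists (A @` s)%fset; split => // j; rewrite mxE => /eqP hj.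
have [i /andP [/eqP Aij xi0]] : exists i : 'I_n, (A i == j) && (x ord0 i != 0).
  apply: contra_notP hj => hn; apply: big1 => i Ai.
  by apply/eqP; apply/negPn/negP => h; apply: hn; exists i; rewrite Ai h.
by apply/imfsetP; exists (val i); [exact: xs | rewrite Aij].
Qed.

Theorem mainTheorem8 (R : realType) (d n : nat) (K : cplx) (A : nat -> nat) :
  BUT_manifold R d n K A ->
  ~ exists F : 'I_d.+1 -> set 'rV[R]_n,
      [/\ (forall i, exists2 C : set 'rV[R]_n, closed C & F i = C `&` @realization R n K),
          (forall x, @realization R n K x -> exists i, F i x) &
          (forall i x, F i x -> ~ F i (@lin_ext R n A x))].
Proof.
move=> [[hman vb conM sinv] [hfree hBU]] [F [hC hcov hna]].
set M := @realization R n K in hC hcov hBU hfree.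
have : forall i, exists C : set 'rV[R]_n, closed C /\ F i = C `&` M.
  by move=> i; case: (hC i) => C ? ?; exists C.
case/choice => C HC.
pose g (x : 'rV[R]_n) : 'rV[R]_d := \row_(j < d) dst (C (widen_ord (leqnSn d) j)) x.
have gc : continuous g.
  apply: lip_cont => x y.
  change (mx_norm (g x - g y) <= `|x - y|); rewrite mx_normrE.
  apply: bigmax_le => // ij _; rewrite !mxE; exact: dst_lip.
have [x Mx gx] := hBU g (continuous_subspaceT gc).
have MAx : M (@lin_ext R n A x) by apply: lin_ext_real => //; case: sinv.
have tr : forall (i : 'I_d.+1) y z, (i < d)%N -> M z -> g y = g z -> F i y -> F i z.
  move=> i y z hi Mz gyz; rewrite (HC i).2 => -[Cy My]; split => //.
  have := congr1 (fun m : 'rV[R]_d => m ord0 (Ordinal hi)) gyz; rewrite !mxE.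
  have -> : widen_ord (leqnSn d) (Ordinal hi) = i by apply: val_inj.
  move=> e; apply: (dst0 (C i) z y (HC i).1 Cy); rewrite -e; exact: dst_in.
have [i Fix] := hcov x Mx; have [k Fkx] := hcov _ MAx.
have [hi|hi] := ltnP i d.
  by apply: (hna i x Fix); apply: (tr i x) => //; rewrite gx.
have [hk|hk] := ltnP k d.
  by apply: (hna k x (tr k _ _ hk Mx gx Fkx)).
have ik : i = k.
  apply: val_inj; have := ltn_ord i; have := ltn_ord k; rewrite /=; lia.
by apply: (hna i x Fix); rewrite ik.
Qed.
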